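(* Let $F$ and $G$ be the distribution functions of laws $P$ and $Q$ on $\mathbb R$ such that $P(\mathbb Z)=1$, $G$ is continuous and strictly increasing, and $P$ and $Q$ are both symmetric about $\frac n2$ for some $n\in\mathbb R$. Let $d:=F(\lfloor\frac n2\rfloor)-G(\lfloor\frac n2\rfloor)$. Then $n\in\mathbb Z$, $d=G(\lceil\frac n2\rceil-)-F(\lceil\frac n2\rceil-)$, and $$d=\begin{cases}G(\frac{n+1}2)-\frac12,& n\text{ odd},\\ \frac12P(\{\frac n2\}),& n\text{ even}.\end{cases}$$ Furthermore, the statement ''for every $s\in\mathbb R$: $|F(s)-G(s)|<d$ if $s\ne\lfloor\frac n2\rfloor$, and $|F(s-)-G(s-)|<d$ if $s\ne\lceil\frac n2\rceil$'' holds iff both of the following hold: $$F(s)-G(s)<d\ \text{ for all } s\in\mathbb Z \text{ with } s>\lfloor\tfrac n2\rfloor,\qquad G(s)-F(s-1)<d\ \text{ for all } s\in\mathbb Z\text{ with } s>\lceil\tfrac n2\rceil.$$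
   Context: $F(s-)$ denotes the left limit of $F$ at $s$. A distribution function is $F(s)=P(]-\infty,s])$. *)

(* Defs.v *)
From HB Require Import structures.
From mathcomp Require Import all_boot all_order all_algebra.
From mathcomp Require Import all_classical all_reals all_analysis.
Set Implicit Arguments. Unset Strict Implicit. Unset Printing Implicit Defensive.
Import Order.TTheory GRing.Theory Num.Theory.
Import numFieldNormedType.Exports.
Local Open Scope classical_set_scope.
Local Open Scope ring_scope.

Definition distfun (R : realType) (P : probability R R) (s : R) : R :=
  fine (P [set` `]-oo, s]]).

Definition left_lim (R : realType) (f : R -> R) (s : R) : R :=
  lim (f x @[x --> s^'-]).

Definition symmetric_about (R : realType) (P : probability R R) (c : R) : Prop :=
  forall A : set R, measurable A -> P A = P ((fun x => 2 * c - x) @^-1` A).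

Definition intset (R : realType) : set R := [set x | exists k : int, x = k%:~R].

(* Main.v *)
Require Import Defs.
From HB Require Import structures.
From mathcomp Require Import all_boot all_order all_algebra.
From mathcomp Require Import all_classical all_reals all_analysis.
From mathcomp Require Import lra zify.
Import Order.TTheory GRing.Theory Num.Theory.
Import numFieldNormedType.Exports.
Local Open Scope classical_set_scope.
Local Open Scope ring_scope.

Lemma core (R : realType) (N fl cl : int) (a : int -> R) (G : R -> R) :
  fl + cl = N -> fl <= cl -> cl <= fl + 1 ->
  {homo G : x y / x < y} ->
  (forall m, a (m - 1) = 1 - a (N - m)) ->
  (forall x, G (N%:~R - x) = 1 - G x) ->
  let d := a fl - G fl%:~R in
  ((forall s : R, (s != fl%:~R -> `|a (Num.floor s) - G s| < d) /\
                  (s != cl%:~R -> `|a (Num.ceil s - 1) - G s| < d))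
   <-> ((forall s : int, fl < s -> a s - G s%:~R < d) /\
        (forall s : int, cl < s -> G s%:~R - a (s - 1) < d))).
Proof.
move=> hN hfc hcf Gi aS GS d.
have Gle : forall x y, x <= y -> G x <= G y.
  by move=> x y; rewrite le_eqVlt => /orP[/eqP->//|/Gi/ltW].
have dId : G cl%:~R - a (cl - 1) = d.
  rewrite aS.
  have -> : N - cl = fl by rewrite -hN addrK.
  have -> : (cl%:~R : R) = N%:~R - fl%:~R by rewrite -hN intrD; lra.
  rewrite GS /d; lra.
split.
- move=> H; split.
  + move=> s hs; have [h _] := H s%:~R.
    have := h; rewrite eqr_int gt_eqF // intrKfloor => /(_ isT).
    by move/ltr_normlP => [h1 h2].
  + move=> s hs; have [_ h] := H s%:~R.
    have := h; rewrite eqr_int gt_eqF // intrKceil => /(_ isT).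
    by move/ltr_normlP => [h1 h2]; lra.
- move=> [R1 R2].
  have Hi : forall t, fl%:~R < t -> `|a (Num.floor t) - G t| < d.
    move=> t ht; set m := Num.floor t.
    have /andP[m1 m2] := floor_itv t; rewrite -/m in m1 m2.
    have flm : fl <= m by rewrite floor_ge_int ltW.
    rewrite ltr_norml; apply/andP; split.
    * have Gt := Gi _ _ m2.
      have [cm|] := ltP cl (m + 1).
        have := R2 _ cm; rewrite addrK; lra.
      move=> mc.
      have em : cl = m + 1 by lia.
      move: dId; rewrite em addrK; lra.
    * move: flm; rewrite le_eqVlt => /orP[/eqP em|flm].
        have := Gi _ _ ht; rewrite -em /d; lra.
      have := R1 _ flm; have := Gle _ _ m1; lra.
  have Hii : forall u, cl%:~R < u -> `|a (Num.ceil u - 1) - G u| < d.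
    move=> u hu; set c := Num.ceil u.
    have /andP[c1 c2] := ceil_itv u; rewrite -/c in c1 c2.
    have clc : cl < c by rewrite ceil_gt_int.
    rewrite ltr_norml; apply/andP; split.
    * have := R2 _ clc; have := Gle _ _ c2; lra.
    * have Gt := Gi _ _ c1.
      have [em|flm] := eqVneq (c - 1) fl.
        by move: Gt; rewrite em /d; lra.
      have flm' : fl < c - 1 by lia.
      have := R1 _ flm'; lra.
  have symm : forall s, `|a (Num.ceil s - 1) - G s| =
       `|a (Num.floor (N%:~R - s)) - G (N%:~R - s)|.
    move=> s; rewrite aS GS.
    have -> : Num.floor (N%:~R - s) = N - Num.ceil s.
      apply: floor_def; have /andP[c1 c2] := ceil_itv s.
      move: c1 c2; rewrite !(intrD, intrB, intrN, rmorph1); lra.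
    rewrite -normrN; congr (`| _ |); lra.
  move=> s; split.
  + move=> hs; case: (ltgtP s fl%:~R) => [sl|sg|se]; last by rewrite se eqxx in hs.
      have := symm (N%:~R - s).
      have -> : N%:~R - (N%:~R - s) = s by lra.
      move=> <-; apply: Hii.
      have : (cl%:~R : R) = N%:~R - fl%:~R by rewrite -hN intrD; lra.
      lra.
    exact: Hi.
  + move=> hs; case: (ltgtP s cl%:~R) => [sl|sg|se]; last by rewrite se eqxx in hs.
      rewrite symm; apply: Hi.
      have : (cl%:~R : R) = N%:~R - fl%:~R by rewrite -hN intrD; lra.
      lra.
    exact: Hii.
Qed.

Section M.
Context (R : realType) (P : probability R R).

Lemma meas_int : measurable (@intset R).
Proof.
have -> : @intset R = \bigcup_(k : int) [set k%:~R].
  apply/seteqP; split => x /=.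
  - by move=> [k ->]; exists k.
  - by move=> [k _ ->]; exists k.
apply: countable_bigcupT_measurable; first exact: countableP.
move=> k; exact: measurable_set1.
Qed.

Lemma PE (A : set R) : measurable A -> P A = (fine (P A))%:E.
Proof. by move=> mA; rewrite fineK // fin_num_measure. Qed.

Lemma Pnull : P (@intset R) = 1%E -> P (~` (@intset R)) = 0%E.
Proof. move=> h; rewrite probability_setC; last exact: meas_int. by rewrite h subee. Qed.

Lemma Peq (A B : set R) : P (@intset R) = 1%E -> measurable A -> measurable B ->
  A `<=` B -> B `\` A `<=` ~` (@intset R) -> P A = P B.
Proof.
move=> h1 mA mB AB BA.
rewrite (measureDI P mB mA).
have -> : B `&` A = A.
  by apply/seteqP; split=> x //=; [case | move=> Ax; split=> //; exact: AB].
have H0 : P (B `\` A) = 0%E.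
  apply/eqP; rewrite eq_le measure_ge0 andbT -(Pnull h1).
  apply: le_measure => //; rewrite inE; [exact: measurableD | exact: measurableC meas_int].
rewrite -[in LHS](add0e (P A)); congr (_ + _)%E; exact: esym H0.
Qed.

Lemma splitU (A B : set R) : measurable A -> measurable B -> A `&` B = set0 ->
  fine (P (A `|` B)) = fine (P A) + fine (P B).
Proof.
move=> mA mB AB; rewrite measureU // fineD //; exact: fin_num_measure.
Qed.

Lemma F_floor (h1 : P (@intset R) = 1%E) x : distfun P x = distfun P (Num.floor x)%:~R.
Proof.
rewrite /distfun (@Peq `]-oo, (Num.floor x)%:~R] `]-oo, x]) //.
- move=> y /=; rewrite !in_itv /= => h; exact: (le_trans h (floor_le x)).
- move=> y /= [] ; rewrite !in_itv /= => yx /negP yfl [k ek].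
  move: yx yfl; rewrite ek -floor_ge_int ler_int; by move=> ->.
Qed.

Lemma P_lt (h1 : P (@intset R) = 1%E) (m : int) :
  P [set` `]-oo, m%:~R[] = P [set` `]-oo, (m - 1)%:~R]].
Proof.
rewrite (@Peq `]-oo, (m - 1)%:~R] `]-oo, m%:~R[) //.
- move=> y /=; rewrite !in_itv /= intrB => h; lra.
- move=> y /= [] ; rewrite !in_itv /= => yx /negP yfl [k ek].
  move: yx yfl; rewrite ek !ltr_int ler_int; lia.
Qed.

Lemma F_left (h1 : P (@intset R) = 1%E) s :
  left_lim (distfun P) s = distfun P (Num.ceil s - 1)%:~R.
Proof.
rewrite /left_lim; apply: norm_lim_near_cst.
near=> x.
rewrite (F_floor h1 x) (_ : Num.floor x = Num.ceil s - 1) //.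
apply: floor_def; apply/andP; split.
  apply: ltW; near: x; exact: nbhs_left_gt (ceilB1_lt s).
rewrite subrK; apply: (lt_le_trans _ (ceil_ge s)); near: x; exact: nbhs_left_lt.
Unshelve. all: by end_near.
Qed.

Lemma sym_ge c (hs : symmetric_about P c) y :
  P [set` `]-oo, 2 * c - y]] = P [set` `[y, +oo[].
Proof.
rewrite hs; last exact: measurable_itv.
congr (P _); apply/seteqP; split => x /=; rewrite !in_itv /= ?andbT; lra.
Qed.

Lemma ge_lt y : fine (P [set` `[y, +oo[]) = 1 - fine (P [set` `]-oo, y[]).
Proof.
rewrite -setCitvl probability_setC; last exact: measurable_itv.
by rewrite (@PE `]-oo, y[) ?measurable_itv //= -EFinB.
Qed.

Lemma lt_split x : fine (P [set` `]-oo, x]]) =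
  fine (P [set` `]-oo, x[]) + fine (P [set x]).
Proof.
rewrite -splitU; [|exact: measurable_itv|exact: measurable_set1|].
- congr (fine (P _)); apply/seteqP; split => y /=; rewrite !in_itv /=.
    by rewrite le_eqVlt => /orP[/eqP->|->]; [right|left].
  by case=> [/ltW|->] //; rewrite lexx.
- apply/seteqP; split => y //=; rewrite in_itv /= => -[yx ye]; move: yx; by rewrite ye ltxx.
Qed.

Lemma le_split y x : y <= x -> fine (P [set` `]-oo, x]]) =
  fine (P [set` `]-oo, y]]) + fine (P [set` `]y, x]]).
Proof.
move=> yx.
rewrite -splitU; [|exact: measurable_itv|exact: measurable_itv|].
- congr (fine (P _)); apply/seteqP; split => z /=; rewrite !in_itv /=.
    by move=> zx; case: (leP z y) => zy; [left|right; apply/andP].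
  by case=> [zy|/andP[_ ->]]//; exact: le_trans zy yx.
- apply/seteqP; split => z //=; rewrite !in_itv /= => -[zy /andP[yz _]].
  by move: (lt_le_trans yz zy); rewrite ltxx.
Qed.

Lemma atom0 (Gc : continuous (distfun P)) x : P [set x] = 0%E.
Proof.
set q := fine (P [set x]).
have q0 : 0 <= q by apply: fine_ge0; exact: measure_ge0.
have qe : forall e, 0 < e -> q <= e.
  move=> e e0.
  have H := cvg_at_left_filter (Gc x).
  move/cvgrPdist_lt : H => /(_ e e0) H.
  have : \forall t \near x^'-, `|distfun P x - distfun P t| < e /\ t < x.
    near=> t; split; [near: t; exact: H| near: t; exact: nbhs_left_lt].
  move=> Hn; have [t [h1 h2]] := @filter_ex _ _ (at_left_proper_filter x) _ Hn.
  have : q <= distfun P x - distfun P t.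
    rewrite /distfun (@le_split t x (ltW h2)) [X in _ <= X](_ : _ = fine (P [set` `]t, x]])); last lra.
    apply: fine_le; try exact: fin_num_measure.
    apply: le_measure; rewrite ?inE; try exact: measurable_itv; try exact: measurable_set1.
    by move=> z /= ->; rewrite in_itv /= h2 lexx.
  move: h1 => /ltr_normlP [? ?]; lra.
have q00 : q = 0.
  case: (ltP 0 q) => [qp|qn]; last lra.
  have := qe (q / 2); lra.
by rewrite (PE _ (measurable_set1 x)) -/q q00.
Unshelve. all: by end_near.
Qed.

Lemma G_left (Gc : continuous (distfun P)) s : left_lim (distfun P) s = distfun P s.
Proof.
rewrite /left_lim; apply: cvg_lim => //; apply: cvg_at_left_filter; exact: Gc.
Qed.

Lemma G_sym (Gc : continuous (distfun P)) c (hs : symmetric_about P c) x :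
  distfun P (2 * c - x) = 1 - distfun P x.
Proof.
rewrite /distfun sym_ge // ge_lt; congr (_ - _).
by rewrite lt_split atom0 // addr0.
Qed.

Lemma n_int (h1 : P (@intset R) = 1%E) c (hs : symmetric_about P c) :
  exists k : int, 2 * c = k%:~R.
Proof.
case: (pselect (exists k : int, 2 * c = k%:~R)) => // nk; exfalso.
set B := (fun x => 2 * c - x) @^-1` (@intset R).
have mB : measurable B.
  have -> : B = \bigcup_(k : int) [set 2 * c - k%:~R].
    apply/seteqP; split => x /=.
    - by move=> [k hk]; exists k => //=; lra.
    - by move=> [k _ ->]; exists k; lra.
  apply: countable_bigcupT_measurable; first exact: countableP.
  move=> k; exact: measurable_set1.
have PB : P B = 1%E by rewrite -h1; exact: esym (hs _ meas_int).
have : (P B <= P (~` (@intset R)))%E.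
  apply: le_measure; rewrite ?inE //; first exact: measurableC meas_int.
  move=> x [k hk] [j hj]; apply: nk; exists (k + j); rewrite intrD -hk -hj; lra.
rewrite Pnull // PB lee_fin; lra.
Qed.

End M.

Lemma oddA (j : int) : odd `|(j + j + 1)%R|%N.
Proof. have h : (`|(j + j + 1)%R|%N %% 2 = 1)%N by lia.
by rewrite modn2 in h; case: (odd _) h. Qed.
Lemma oddB (j : int) : ~~ odd `|(j + j)%R|%N.
Proof. have h : (`|(j + j)%R|%N %% 2 = 0)%N by lia.
by rewrite modn2 in h; case: (odd _) h. Qed.

Theorem lemma1p6 (R : realType) (P Q : probability R R) (n : R) :
  P (@intset R) = 1%E ->
  continuous (distfun Q) ->
  {homo distfun Q : x y / x < y} ->
  symmetric_about P (n / 2) ->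
  symmetric_about Q (n / 2) ->
  let F := distfun P in
  let G := distfun Q in
  let fl : R := (Num.floor (n / 2))%:~R in
  let cl : R := (Num.ceil (n / 2))%:~R in
  let d := F fl - G fl in
  exists k : int, n = k%:~R /\
    d = left_lim G cl - left_lim F cl /\
    (if odd `|k|%N then d = G ((n + 1) / 2) - 2^-1
     else d = 2^-1 * fine (P [set n / 2])) /\
    ((forall s : R,
        (s != fl -> `|F s - G s| < d) /\
        (s != cl -> `|left_lim F s - left_lim G s| < d))
     <->
     ((forall s : int, Num.floor (n / 2) < s -> F s%:~R - G s%:~R < d) /\
      (forall s : int, Num.ceil (n / 2) < s -> G s%:~R - F (s%:~R - 1) < d))).
Proof.
move=> h1 Gc Gi hP hQ F G fl cl d.
rewrite {}/d {}/fl {}/cl {}/F {}/G.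
have [N hN] := @n_int R P h1 _ hP.
have nN : n = N%:~R by rewrite -hN; lra.
set a := fun k : int => distfun P k%:~R.
have hF : forall x, distfun P x = a (Num.floor x) := @F_floor R P h1.
have hFl : forall s, left_lim (distfun P) s = a (Num.ceil s - 1) := @F_left R P h1.
have hGl : forall s, left_lim (distfun Q) s = distfun Q s := @G_left R Q Gc.
have aS : forall m, a (m - 1) = 1 - a (N - m).
  move=> m; rewrite /a /distfun [(N - m)%:~R]intrB -hN sym_ge // ge_lt P_lt //; lra.
have GS : forall x, distfun Q (N%:~R - x) = 1 - distfun Q x.
  by move=> x; rewrite -hN; exact: G_sym.
set fz := Num.floor (n / 2); set cz := Num.ceil (n / 2).
have /andP[f1 f2] := floor_itv (n / 2); rewrite -/fz in f1 f2.
have e0 : N = fz + fz \/ N = fz + fz + 1.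
  have g1 : fz + fz <= N by rewrite -(ler_int R) intrD; move: f1; rewrite nN; lra.
  have g2 : N < fz + fz + 2 by rewrite -(ltr_int R) !intrD; move: f2; rewrite intrD nN; lra.
  lia.
have D : (cz = fz /\ N = fz + fz) \/ (cz = fz + 1 /\ N = fz + fz + 1).
  case: e0 => e; [left|right]; split => //.
  have nf : n / 2 = fz%:~R by rewrite nN e intrD; lra.
  by rewrite /cz nf intrKceil.
  have nf : n / 2 = fz%:~R + 2^-1 by rewrite nN e !(intrD, rmorph1); lra.
  apply: ceil_def; rewrite addrK nf !(intrD, rmorph1); apply/andP; split; lra.
have hsum : fz + cz = N by case: D => -[-> ->]; lia.
have hle1 : fz <= cz by case: D => -[-> _]; lia.
have hle2 : cz <= fz + 1 by case: D => -[-> _]; lia.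
have IFF : ((forall s : R,
        (s != fz%:~R -> `|distfun P s - distfun Q s| < distfun P fz%:~R - distfun Q fz%:~R) /\
        (s != cz%:~R -> `|left_lim (distfun P) s - left_lim (distfun Q) s| < distfun P fz%:~R - distfun Q fz%:~R))
     <->
     ((forall s : int, fz < s -> distfun P s%:~R - distfun Q s%:~R < distfun P fz%:~R - distfun Q fz%:~R) /\
      (forall s : int, cz < s -> distfun Q s%:~R - distfun P (s%:~R - 1) < distfun P fz%:~R - distfun Q fz%:~R))).
  have C := @core R N fz cz a (distfun Q) hsum hle1 hle2 Gi aS GS.
  cbv beta zeta in C.
  split.
  + move=> H.
    have [R1 R2] : (forall s : int, fz < s -> a s - distfun Q s%:~R < a fz - distfun Q fz%:~R) /\
        (forall s : int, cz < s -> distfun Q s%:~R - a (s - 1) < a fz - distfun Q fz%:~R).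
      apply/C => s; have [Ha Hb] := H s; rewrite hF in Ha; rewrite hFl hGl in Hb; split; assumption.
    split; first exact: R1.
    move=> s hs; have -> : (s%:~R - 1 : R) = (s - 1)%:~R by rewrite intrB.
    exact: R2.
  + move=> [R1 R2].
    have R2' : forall s : int, cz < s -> distfun Q s%:~R - a (s - 1) < a fz - distfun Q fz%:~R.
      by move=> s hs; rewrite /a intrB; exact: R2 s hs.
    have H := C.2 (conj R1 R2').
    move=> s; have [Ha Hb] := H s; rewrite hF hFl hGl; split; assumption.
have dId : distfun P fz%:~R - distfun Q fz%:~R =
    left_lim (distfun Q) cz%:~R - left_lim (distfun P) cz%:~R.
  rewrite hGl hFl intrKceil.
  have -> : (cz%:~R : R) = N%:~R - fz%:~R by rewrite -hsum intrD; lra.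
  rewrite GS -/(a fz) -/(a (cz - 1)) aS.
  have -> : N - cz = fz by lia.
  lra.
case: D => -[ec e].
-
  have nf : n / 2 = fz%:~R by rewrite nN e intrD; lra.
  exists N; split => //; split => //.
  have afz : a fz = 1 - a (fz - 1) by rewrite aS e addrK; lra.
  have Gfz : distfun Q fz%:~R = 2^-1.
    have := GS fz%:~R; rewrite e intrD addrK; lra.
  split => //.
  rewrite e (negbTE (oddB fz)) nf -/(a fz).
  have := @lt_split R P fz%:~R; rewrite P_lt // -/(distfun P _) -/(distfun P _).
  rewrite -/(a fz) -/(a (fz - 1)) Gfz; lra.
-
  have nf : (n + 1) / 2 = (fz + 1)%:~R by rewrite nN e !(intrD, rmorph1); lra.
  exists N; split => //; split => //.
  split => //.
  rewrite e oddA nf.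
  have afz : a fz = 1 - a fz.
    by have := aS (fz + 1); rewrite addrK (_ : N - (fz + 1) = fz) //; lia.
  have Gfz : distfun Q fz%:~R = 1 - distfun Q (fz + 1)%:~R.
    have := GS (fz + 1)%:~R; rewrite (_ : N%:~R - (fz + 1)%:~R = fz%:~R); first lra.
    by rewrite e !(intrD, rmorph1); lra.
  rewrite -/(a fz) Gfz; lra.
Qed.
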